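(* Let $n\ge4$ with $n\ne 6,10$. Then $\gamma_e(P_n)\ge\lceil (n+3)/2\rceil$.
   Context: $P_n$ is the path on $n$ vertices $[x_1,\dots,x_n]$ with edges $\{x_i,x_{i+1}\}$. In a finite simple graph $\Gamma=(V,E)$ with distance $d$, a vertex $v$ carrying a non-negative integer label $\ell$ dominates (covers) exactly the vertices $u$ with $d(u,v)=\ell$; a vertex labeled $0$ dominates only itself. An extended irregular dominating set is a set $S\subseteq V$ with a labeling $\lambda:S\to\mathbb{Z}_{\ge0}$ with distinct labels on distinct vertices, such that every vertex of $V$ is dominated by some vertex of $S$; some vertex of $S$ has label $0$. $\gamma_e(\Gamma)$ denotes the minimum cardinality of an extended irregular dominating set of $\Gamma$. *)

(* Defs.v *)
From mathcomp Require Import all_boot.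
Set Implicit Arguments. Unset Strict Implicit. Unset Printing Implicit Defensive.

Fixpoint walk (T : finType) (e : rel T) (k : nat) (u v : T) : bool :=
  match k with
  | 0 => u == v
  | k'.+1 => [exists w, e u w && walk e k' w v]
  end.

Definition dist_eq (T : finType) (e : rel T) (u v : T) (l : nat) : bool :=
  walk e l u v && [forall m : 'I_l, ~~ walk e m u v].

Definition dominates (T : finType) (e : rel T) (lab : T -> nat) (v u : T) : bool :=
  dist_eq e v u (lab v).

Definition ext_irr_dom (T : finType) (e : rel T) (S : {set T}) (lab : T -> nat) : Prop :=
  {in S &, injective lab} /\
  (forall u : T, exists2 v, v \in S & dominates e lab v u) /\
  (exists2 v, v \in S & lab v = 0).

Definition path_rel (n : nat) : rel 'I_n :=
  fun i j => (i.+1 == j :> nat) || (j.+1 == i :> nat).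

(* Main.v *)
Require Import Defs.
From mathcomp Require Import all_boot zify.

Definition fin (n m : nat) (cov cent : seq nat) : bool :=
  has (fun z => has (fun u => has (fun w =>
    [&& z \notin cent, z \notin cov, u \notin cov, u != z, w \notin cent, w != z &
        m <= (w - u) + (u - w)]) (iota 0 n)) (iota 0 n)) (iota 0 n).

Fixpoint srch (n m l : nat) (cov cent : seq nat) : bool :=
  match l with
  | 0 => fin n m cov cent
  | l'.+1 => has (fun c => if [&& l'.+1 <= c, c + l'.+1 < n, c \notin cent,
                c - l'.+1 \notin cov & c + l'.+1 \notin cov] then
                srch n m l' (c - l'.+1 :: c + l'.+1 :: cov) (c :: cent) else false) (iota 0 n)
  end.




Lemma srch_ok n m : forall l (cov cent : seq nat) (c : nat -> nat) (z u w : nat),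
 (forall j, 0 < j <= l -> [/\ j <= c j, c j + j < n, c j \notin cent, c j - j \notin cov & c j + j \notin cov]) ->
 (forall i j, 0 < i -> i < j -> j <= l -> [/\ c i != c j, c i - i != c j - j, c i - i != c j + j, c i + i != c j - j & c i + i != c j + j]) ->
 z < n -> u < n -> w < n ->
 z \notin cent -> z \notin cov -> u \notin cov -> u != z -> w \notin cent -> w != z -> m <= (w - u) + (u - w) ->
 (forall j, 0 < j <= l -> [/\ z != c j, z != c j - j, z != c j + j & w != c j]) ->
 (forall j, 0 < j <= l -> u != c j - j /\ u != c j + j) ->
 srch n m l cov cent.
Proof.
elim=> [|l IH] cov cent c z u w H1 H2 zn un wn zc zv uv uz wc wz mw H3 H4 /=.
  apply/hasP; exists z; first by rewrite mem_iota.
  apply/hasP; exists u; first by rewrite mem_iota.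
  apply/hasP; exists w; first by rewrite mem_iota.
  by rewrite zc zv uv uz wc wz mw.
have [a1 a2 a3 a4 a5] := H1 l.+1 (leqnn _).
apply/hasP; exists (c l.+1); first by rewrite mem_iota add0n; lia.
rewrite a1 a2 a3 a4 a5 /=.
apply: (IH _ _ c z u w) => //.
- move=> j /andP[j0 jl].
  have [b1 b2 b3 b4 b5] := H1 j (ltac:(lia)).
  have [e1 e2 e3 e4 e5] := H2 j l.+1 j0 (ltac:(lia)) (leqnn _).
  by rewrite !inE b1 b2 (negPf b3) (negPf b4) (negPf b5) (negPf e1) (negPf e2) (negPf e3) (negPf e4) (negPf e5).
- move=> i j i0 ij jl; exact: H2 i j i0 ij (leqW jl).
- have [f1 f2 f3 f6] := H3 l.+1 (leqnn _).
  by rewrite !inE negb_or f1 zc.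
- have [f1 f2 f3 f6] := H3 l.+1 (leqnn _).
  by rewrite !inE !negb_or f2 f3 zv.
- have [f4 f5] := H4 l.+1 (leqnn _).
  by rewrite !inE !negb_or f4 f5 uv.
- have [f1 f2 f3 f6] := H3 l.+1 (leqnn _).
  by rewrite !inE !negb_or f6 wc.
- move=> j /andP[j0 jl]; exact: H3 j (ltac:(lia)).
- move=> j /andP[j0 jl]; exact: H4 j (ltac:(lia)).
Qed.

Definition dst (a b : nat) := (a - b) + (b - a).

Lemma walk_dst n k (u v : 'I_n) : walk (@path_rel n) k u v -> dst u v <= k.
Proof.
elim: k u => [|k IH] u /=.
  by move/eqP->; rewrite /dst subnn.
case/existsP=> w /andP[e /IH]; rewrite /path_rel in e.
by case/orP: e => /eqP e; rewrite /dst; lia.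
Qed.

Lemma dst_walk n k (u v : 'I_n) : dst u v = k -> walk (@path_rel n) k u v.
Proof.
elim: k u => [|k IH] u /= H.
  by apply/eqP/ord_inj; rewrite /dst in H; lia.
apply/existsP; case: (ltnP u v) => huv.
  have hw : u.+1 < n by apply: leq_ltn_trans (ltn_ord v).
  exists (Ordinal hw); rewrite /path_rel /= eqxx /=.
  by apply: IH; rewrite /dst /=; rewrite /dst in H; lia.
have hw : u.-1 < n by have := ltn_ord u; lia.
exists (Ordinal hw); apply/andP; split.
  by rewrite /path_rel /=; apply/orP; right; apply/eqP; rewrite /dst in H; lia.
by apply: IH; rewrite /dst /=; rewrite /dst in H; lia.
Qed.

Lemma dom_iff n (lab : 'I_n -> nat) (v u : 'I_n) :
  dominates (@path_rel n) lab v u = (lab v == dst v u).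
Proof.
rewrite /dominates /dist_eq; apply/andP/eqP => [[W /forallP F]|->].
  have le := @walk_dst _ _ _ _ W.
  apply/eqP; rewrite eqn_leq le andbT leqNgt; apply/negP => lt.
  by move: (F (Ordinal lt)) => /negP; apply; apply: dst_walk.
split; first exact: dst_walk.
by apply/forallP => m; apply/negP => /walk_dst; have := ltn_ord m; lia.
Qed.

Definition Xc (c u : nat) := (2 * u - c) ^ 2 + (c - 2 * u) ^ 2.

Lemma Xc_step c N : Xc c N + 4 * c * N = 4 * N ^ 2 + c ^ 2.
Proof. rewrite /Xc; nia. Qed.

Lemma Xc_pair c v l : l <= v -> Xc c (v - l) + Xc c (v + l) = 2 * Xc c v + 8 * l ^ 2.
Proof.
move=> h; rewrite -(subnK h) addnK.
have := Xc_step c (v - l); have := Xc_step c (v - l + l + l); have := Xc_step c (v - l + l).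
move: (Xc c (v - l)) (Xc c (v - l + l + l)) (Xc c (v - l + l)) => a b d.
rewrite -addnA. move: (v - l) => p. nia.
Qed.

Lemma Xc_sum c N : 3 * \sum_(u < N) Xc c u + 6 * c * (N * N) + 6 * (N * N) =
   6 * c * N + 4 * (N * (N * N)) + 2 * N + 3 * N * c ^ 2.
Proof.
elim: N => [|N IH]; first by rewrite big_ord0; lia.
rewrite big_ord_recr /= mulnDr.
have := Xc_step c N; move: (\sum_(i < N) Xc c i) (Xc c N) IH => s x IH H.
rewrite -[N.+1]addn1; nia.
Qed.

Lemma sumsq N : 6 * \sum_(i < N) i ^ 2 + 3 * N ^ 2 = 2 * N ^ 3 + N.
Proof.
elim: N => [|N IH]; first by rewrite big_ord0; lia.
rewrite big_ord_recr /=; move: (\sum_(i < N) _) IH => s IH.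
rewrite -[N.+1]addn1; nia.
Qed.

Lemma sumsq1 N : 6 * \sum_(i < N) i.+1 ^ 2 = 2 * N ^ 3 + 3 * N ^ 2 + N.
Proof.
elim: N => [|N IH]; first by rewrite big_ord0; lia.
rewrite big_ord_recr /=; move: (\sum_(i < N) _) IH => s IH.
rewrite -[N.+1]addn1; nia.
Qed.

Lemma distinct_sum (f : nat -> nat) (s : seq nat) :
  {homo f : i j / i <= j} -> uniq s -> \sum_(i < size s) f i <= \sum_(x <- s) f x.
Proof.
move=> mf; move Hk: (size s) => k.
elim: k s Hk => [|k IH] s Hk us; first by rewrite big_ord0.
have [x xs kx] : exists2 x, x \in s & k <= x.
  case: (boolP (has (fun x => k <= x) s)) => [/hasP//|H]; exfalso.
  have sub : {subset s <= iota 0 k}.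
    by move=> x xs; rewrite mem_iota /= add0n ltnNge; apply: (hasPn H x xs).
  by have := uniq_leq_size us sub; rewrite size_iota Hk ltnn.
rewrite (perm_big _ (perm_to_rem xs)) big_cons big_ord_recr /= addnC leq_add //.
  by apply: mf.
apply: IH; last by rewrite rem_uniq.
by rewrite size_rem // Hk.
Qed.

Lemma T_odd T n h : n = 2 * h + 1 ->
  3 * T + 6 * (n - 1) * (n * n) + 6 * (n * n) =
   6 * (n - 1) * n + 4 * (n * (n * n)) + 2 * n + 3 * n * (n - 1) ^ 2 ->
  3 * T = 8 * h ^ 3 + 12 * h ^ 2 + 4 * h.
Proof. move=> ->; rewrite addnK; nia. Qed.

Lemma T_even T n h : n = 2 * h + 2 ->
  3 * T + 6 * (n - 1) * (n * n) + 6 * (n * n) =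
   6 * (n - 1) * n + 4 * (n * (n * n)) + 2 * n + 3 * n * (n - 1) ^ 2 ->
  3 * T = 8 * h ^ 3 + 24 * h ^ 2 + 22 * h + 6.
Proof. move=> ->; have -> : 2 * h + 2 - 1 = 2 * h + 1 by lia. nia. Qed.

Lemma a2 h : 2 <= h -> 3 * h ^ 2 < 2 * h ^ 3 + h.
Proof. move=> H. nia. Qed.
Lemma a3 h : 9 <= h -> 15 * h ^ 2 + 17 * h + 6 < 2 * h ^ 3.
Proof. move=> H. nia. Qed.

Theorem corollary5p8 (n : nat) (S : {set 'I_n}) (lab : 'I_n -> nat) :
  4 <= n -> n != 6 -> n != 10 ->
  ext_irr_dom (@path_rel n) S lab ->
  (n + 4) %/ 2 <= #|S|.
Proof.
move=> n4 n6 n10 [inj [covr [z zS z0]]].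
rewrite leqNgt; apply/negP => Hk.
have domE := @dom_iff n lab.
pose d := fun u : 'I_n => if u == z then z else odflt z [pick v in S | lab v == dst v u].
have dP : forall u, d u \in S /\ lab (d u) = dst (d u) u.
  move=> u; rewrite /d; case: eqP => [->|_]; first by rewrite z0 /dst subnn.
  case: pickP => [v /andP[vS /eqP]|H] //=.
  have [v vS] := covr u; rewrite domE => /eqP e.
  by move: (H v); rewrite vS e eqxx.
have dS u : d u \in S by case: (dP u).
have dl u : lab (d u) = dst (d u) u by case: (dP u).
have dz : d z = z by rewrite /d eqxx.
pose F := fun v => [set u | d u == v].
pose A := [set v in S | 1 < #|F v|].
have AS : A \subset S by apply/subsetP => v; rewrite inE => /andP[].
have Aprop : forall v, v \in A -> [/\ 0 < lab v, lab v <= v, v + lab v < n &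
    forall u : 'I_n, (d u == v) = ((nat_of_ord u + lab v == v) || (v + lab v == nat_of_ord u))].
  move=> v; rewrite inE => /andP[vS /card_gt1P [u1 [u2 [h1 h2 ne]]]].
  rewrite !inE in h1 h2.
  have e1 := dl u1; have e2 := dl u2; rewrite (eqP h1) in e1; rewrite (eqP h2) in e2.
  have ne' : nat_of_ord u1 <> nat_of_ord u2 by move=> /ord_inj E; rewrite E eqxx in ne.
  have l1 := ltn_ord u1; have l2 := ltn_ord u2.
  rewrite /dst in e1 e2.
  split; try lia.
  move=> u; apply/idP/idP.
    move/eqP=> e; have := dl u; rewrite e /dst => h.
    by case: (leqP u v) => h'; apply/orP; [left|right]; apply/eqP; lia.
  move=> H.
  have: nat_of_ord u = u1 \/ nat_of_ord u = u2 by case/orP: H => /eqP H; lia.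
  by case=> /ord_inj ->; [exact: h1|exact: h2].
have Fsum : forall (f : 'I_n -> nat) v, v \in A -> exists p1 p2 : 'I_n,
    [/\ nat_of_ord p1 = v - lab v, nat_of_ord p2 = v + lab v & \sum_(u | d u == v) f u = f p1 + f p2].
  move=> f v vA; have [l0 lv vn dE] := Aprop v vA.
  have h1 : v - lab v < n by lia.
  exists (Ordinal h1), (Ordinal vn); split => //.
  have E : forall u : 'I_n, (d u == v) = (u \in [set Ordinal h1; Ordinal vn]).
    move=> u; rewrite dE !inE -!(inj_eq (@ord_inj n)) /=.
    by apply/idP/idP => /orP[] /eqP H; apply/orP; [left|right|left|right]; apply/eqP; lia.
  rewrite (eq_bigl _ _ E) big_setU1 ?big_set1 // inE -(inj_eq (@ord_inj n)) /=.
  apply/eqP; lia.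
have part : forall f : 'I_n -> nat, \sum_(u < n) f u = \sum_(v in S) \sum_(u | d u == v) f u.
  move=> f; rewrite (partition_big d (mem S)) //=.
have cardF : forall v, #|F v| = \sum_(u | d u == v) 1.
  by move=> v; rewrite -sum1_card; apply: eq_bigl => u; rewrite inE.
have cnt : n = \sum_(v in S) #|F v|.
  rewrite -{1}(card_ord n) -sum1_card part; apply: eq_bigr => v _; by rewrite cardF.
have SA : S :&: A = A by apply/setIidPr.
have cntA : \sum_(v in A) #|F v| <= 2 * #|A|.
  rewrite mulnC -sum_nat_const; apply: leq_sum => v vA.
  by rewrite cardF; have [p1 [p2 [_ _ ->]]] := Fsum (fun _ => 1) v vA.
have cntB : \sum_(v in S :\: A) #|F v| <= #|S :\: A|.
  rewrite -sum1_card; apply: leq_sum => v; rewrite !inE => /andP[vA vS].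
  by move: vA; rewrite vS /= -leqNgt.
have cntS : n <= 2 * #|A| + #|S :\: A|.
  by rewrite {1}cnt (big_setID A) SA /=; apply: leq_add.
have cID := cardsID A S; rewrite SA in cID.
set h := (n - 1) %/ 2.
have labA : {in A &, injective lab}.
  by move=> x y xA yA; apply: inj; apply: (subsetP AS).
pose s := [seq lab v | v <- enum A].
have us : uniq s by rewrite map_inj_in_uniq ?enum_uniq // => x y; rewrite !mem_enum; apply: labA.
have sz : size s = #|A| by rewrite size_map -cardE.
have srange : {subset s <= iota 1 h}.
  move=> x /mapP [v]; rewrite mem_enum => vA ->.
  have [l0 lv vn _] := Aprop v vA.
  rewrite mem_iota; have := ltn_ord v; rewrite /h; lia.
have aleh : #|A| <= h by rewrite -sz -(size_iota 1 h); apply: uniq_leq_size.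
have aeq : #|A| = h by rewrite /h in aleh *; lia.
pose t := fun v : nat => if 2 * v <= n - 1 then (n - 1) - 2 * v else 2 * v - n.
have XA : \sum_(i < h) i ^ 2 <= \sum_(v in A) Xc (n - 1) v.
  have ut : uniq [seq t (nat_of_ord v) | v <- enum A].
    rewrite map_inj_in_uniq ?enum_uniq // => x y _ _; rewrite /t => E.
    apply: ord_inj; move: E; case: ifP => ? ; case: ifP => ? ; lia.
  have := @distinct_sum (fun i => i ^ 2) _ (ltac:(move=> i j ij /=; nia)) ut.
  rewrite size_map -cardE aeq big_map big_enum /= => H; apply: leq_trans H _.
  by apply: leq_sum => v _; rewrite /t /Xc; case: ifP => ?; nia.
have LA : \sum_(i < h) i.+1 ^ 2 <= \sum_(v in A) lab v ^ 2.
  have ul : uniq [seq (lab v).-1 | v <- enum A].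
    rewrite map_inj_in_uniq ?enum_uniq // => x y; rewrite !mem_enum => xA yA E.
    apply: labA => //; have [? _ _ _] := Aprop x xA; have [? _ _ _] := Aprop y yA; lia.
  have := @distinct_sum (fun i => i.+1 ^ 2) _ (ltac:(move=> i j ij /=; nia)) ul.
  rewrite size_map -cardE aeq big_map big_enum /= => H; apply: leq_trans H _.
  by apply: eq_leq; apply: eq_bigr => v vA; have [? _ _ _] := Aprop v vA; rewrite prednK.
have TA : \sum_(v in A) (2 * Xc (n - 1) v + 8 * lab v ^ 2) <= \sum_(u < n) Xc (n - 1) u.
  rewrite part (@big_setID _ _ _ _ S A) SA /=; apply: leq_trans (leq_addr _ _).
  apply: eq_leq; apply: eq_bigr => v vA; have [p1 [p2 [e1 e2 ->]]] := Fsum (Xc (n - 1)) v vA.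
  by have [_ lv _ _] := Aprop v vA; rewrite e1 e2 Xc_pair.
rewrite big_split /= -!big_distrr /= in TA.
have T3 := Xc_sum (n - 1) n.
have Q0 := sumsq h; have Q1 := sumsq1 h.
move: (\sum_(u < n) _) (\sum_(v in A) Xc _ _) (\sum_(v in A) lab v ^ 2) (\sum_(i < h) i ^ 2)
   (\sum_(i < h) i.+1 ^ 2) TA T3 Q0 Q1 XA LA => T X L q0 q1 TA T3 Q0 Q1 XA LA.
have key : 6 * q0 + 24 * q1 <= 3 * T by lia.
have hdef : h = (n - 1) %/ 2 by [].
have [hn|hn] : n = 2 * h + 1 \/ n = 2 * h + 2 by rewrite hdef; lia.
  have h2 : 2 <= h by lia.
  have T3' := @T_odd _ _ _ hn T3.
  have := @a2 _ h2.
  clear -key Q0 Q1 T3'; lia.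
have [h9|h9] := leqP 9 h.
  have T3' := @T_even _ _ _ hn T3.
  have := @a3 _ h9.
  clear -key Q0 Q1 T3'; lia.
move/eqP: n6 => n6; move/eqP: n10 => n10.
have nsrch : ~~ srch n h.+1 h [::] [::].
  rewrite hdef; have : n = 4 \/ n = 8 \/ n = 12 \/ n = 14 \/ n = 16 \/ n = 18 by clear -hn h9 n4 n6 n10; lia.
  by case=> [->|[->|[->|[->|[->|->]]]]]; vm_compute.
have surj : forall j, 0 < j <= h -> exists2 v, v \in A & lab v = j.
  move=> j hj.
  have [_ E] := uniq_min_size us srange (ltac:(by rewrite size_iota sz aeq)).
  have : j \in s by rewrite E mem_iota; clear -hj; lia.
  by case/mapP=> v; rewrite mem_enum => vA ->; exists v.
pose V := fun j => odflt z [pick v in A | lab v == j].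
have VP : forall j, 0 < j <= h -> V j \in A /\ lab (V j) = j.
  move=> j hj; rewrite /V; case: pickP => [v /andP[vA /eqP lv]|H] //=.
  by have [v vA lv] := surj j hj; move: (H v); rewrite vA lv eqxx.
pose c := fun j => nat_of_ord (V j).
have cP : forall j, 0 < j <= h -> j <= c j /\ c j + j < n.
  move=> j hj; have [VA lV] := VP j hj; have [_ lv vn _] := Aprop _ VA.
  by rewrite lV in lv vn.
have onpair : forall j (u : 'I_n), 0 < j <= h ->
    (nat_of_ord u + j = c j \/ c j + j = nat_of_ord u) -> d u = V j.
  move=> j u hj H; have [VA lV] := VP j hj; have [_ _ _ dE] := Aprop _ VA.
  by apply/eqP; rewrite dE lV; rewrite /c in H; case: H => ->; rewrite eqxx ?orbT.
have pd : forall i j x, 0 < i -> i < j -> j <= h -> x < n ->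
    (x + i = c i \/ c i + i = x) -> (x + j = c j \/ c j + j = x) -> False.
  move=> i j x i0 ij jh xn Hi Hj.
  have e1 := onpair i (Ordinal xn) (ltac:(clear -i0 ij jh; lia)) Hi.
  have e2 := onpair j (Ordinal xn) (ltac:(clear -i0 ij jh; lia)) Hj.
  have [_ l1] := VP i (ltac:(clear -i0 ij jh; lia)); have [_ l2] := VP j (ltac:(clear -i0 ij jh; lia)).
  by move: l1 l2; rewrite -e1 e2 => l1 l2; clear -l1 l2 ij; lia.
have zA : z \notin A by apply/negP => /Aprop [l0 _ _ _]; rewrite z0 in l0.
have zSA : z \in S :\: A by rewrite inE zA zS.
have Fz : #|F z| <= 1 by move: zA; rewrite inE zS /= -leqNgt.
have sumSA : 2 <= \sum_(v in S :\: A) #|F v|.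
  have := cnt; rewrite (@big_setID _ _ _ _ S A) SA /= => E.
  set X1 := (\sum_(v in A) #|F v|) in E cntA. set Y1 := (\sum_(v in S :\: A) #|F v|) in E *.
  move: E cntA aeq hn. clear. lia.
have [w wP] : exists w, [&& w \in S :\: A, w != z & 0 < #|F w|].
  case: (pickP (fun w => [&& w \in S :\: A, w != z & 0 < #|F w|])) => [w H|H]; first by exists w.
  exfalso; move: sumSA; rewrite (bigD1 z zSA) big1 ?addn0 => [|v /andP[vin vz]]; first by move=> H2; have : 1 < #|F z| + 0 := H2; rewrite addn0 => H3; have := leq_trans H3 Fz.
  have vin' : v \in S :\: A := vin.
  have : [&& v \in S :\: A, v != z & 0 < #|F v|] = false := H v.
  by rewrite vin' vz /= lt0n => /negbFE /eqP.
case/and3P: wP => wSA wz /card_gt0P [u uF]; rewrite inE in uF.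
move: wSA; rewrite inE => /andP[wA wS].
have lw := dl u; rewrite (eqP uF) in lw.
have lw0 : lab w != 0.
  apply/eqP => l0; have wz' : w = z by apply: inj => //; rewrite l0 z0.
  by rewrite wz' eqxx in wz.
have lwh : h < lab w.
  rewrite ltnNge; apply/negP => le.
  have [VA lV] := VP (lab w) (ltac:(clear -lw0 le; lia)).
  have : V (lab w) = w by apply: inj => //; apply: (subsetP AS).
  by move=> E; rewrite E in VA; rewrite VA in wA.
move/negP: nsrch; apply.
apply: (@srch_ok n h.+1 h [::] [::] c z u w) => //.
- by move=> j hj; have [? ?] := cP j hj; split.
- move=> i j i0 ij jh; have [a1 a2] := cP i (ltac:(clear -i0 ij jh; lia)); have [b1 b2] := cP j (ltac:(clear -i0 ij jh; lia)).
  split; apply/eqP => E.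
  + have EV : V i = V j by apply: ord_inj.
    have [_ l1] := VP i (ltac:(clear -i0 ij jh; lia)); have [_ l2] := VP j (ltac:(clear -i0 ij jh; lia)).
    by rewrite EV in l1; clear -l1 l2 ij; lia.
  + by apply: (pd i j (c i - i)) => //; clear -a1 a2 b1 b2 E; lia.
  + by apply: (pd i j (c i - i)) => //; clear -a1 a2 b1 b2 E; lia.
  + by apply: (pd i j (c i + i)) => //; clear -a1 a2 b1 b2 E; lia.
  + by apply: (pd i j (c i + i)) => //; clear -a1 a2 b1 b2 E; lia.
- apply/eqP => E; have E' : u = z by apply: ord_inj.
  by move: uF; rewrite E' dz eq_sym (negPf wz).
- by rewrite /dst in lw; clear -lw lwh; lia.
- move=> j hj; have [VA lV] := VP j hj; have [a1 a2] := cP j hj.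
  split; apply/eqP => E.
  + have EV : z = V j by apply: ord_inj.
    by rewrite -EV in VA; rewrite VA in zA.
  + have := onpair j z hj (ltac:(clear -E a1 a2; lia)); rewrite dz => EV.
    by rewrite -EV in VA; rewrite VA in zA.
  + have := onpair j z hj (ltac:(clear -E a1 a2; lia)); rewrite dz => EV.
    by rewrite -EV in VA; rewrite VA in zA.
  + have EV : w = V j by apply: ord_inj.
    by rewrite -EV in VA; rewrite VA in wA.
- move=> j hj; have [VA lV] := VP j hj; have [a1 a2] := cP j hj.
  split; apply/eqP => E.
  + have := onpair j u hj (ltac:(clear -E a1 a2; lia)); rewrite (eqP uF) => EV.
    by rewrite -EV in VA; rewrite VA in wA.
  + have := onpair j u hj (ltac:(clear -E a1 a2; lia)); rewrite (eqP uF) => EV.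
    by rewrite -EV in VA; rewrite VA in wA.
Qed.
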